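(* Each of the axioms (A1), (A3), (A4) is independent of the other two in the presence of (A2). Specifically: (a) The rule $C_\lambda(R)=\sum_i\frac{\lambda_i}{\bar\lambda}R_i$ satisfies (A1), (A2), (A3) but not (A4). (b) The rule defined by $C_\lambda(R)=q^{-1}\!\left(\frac{\sum_i\lambda_iq(R_i)}{\sum_i\lambda_i}\right)$ when $n\in\{1,2\}$ and $C_\lambda(R)=\frac{\sum_i\lambda_iR_i}{\sum_i\lambda_i}$ when $n\ge3$ satisfies (A1), (A2), (A4) but not (A3). (c) Fix $\eta>0$; with $w_i=\lambda_i/\bar\lambda$ and Shannon entropy $H(w)=-\sum_iw_i\log w_i$ (natural logarithm), the rule $C_\lambda(R)=q^{-1}\!\left(\sum_iw_iq(R_i)+\eta H(w)\right)$ satisfies (A2), (A3), (A4) but not (A1).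
   Context: Let $q(r)=10^{r/400}$, $q^{-1}(s)=400\log_{10}s$ ($s>0$), and $E(a,b)=1/(1+10^{(b-a)/400})$. A combined rating rule assigns to every $n\ge1$ and every $\lambda\in(0,\infty)^n$ a function $C_\lambda:\mathbb{R}^n\to\mathbb{R}$. Write $\bar\lambda=\sum_i\lambda_i$; for nonempty $B\subseteq\{1,\dots,n\}$, $R_B=(R_i)_{i\in B}$, $\lambda_B=(\lambda_i)_{i\in B}$ (inherited increasing order), $\bar\lambda_B=\sum_{i\in B}\lambda_i$; $\mathbf 1$ is the all-ones vector. (A1) Same-scale normalization: $C_\lambda(r\mathbf 1)=r$ for all $\lambda$ and $r\in\mathbb{R}$. (A2) Regularity and monotonicity: for each $n$, $(\lambda,R)\mapsto C_\lambda(R)$ is continuous on $(0,\infty)^n\times\mathbb{R}^n$; for each fixed $\lambda$, $C_\lambda$ is continuously differentiable with $\partial_iC_\lambda(R)>0$ for all $i$, $R$. (A3) Recursive consistency: for every ordered partition $(B_1,\dots,B_m)$ of $\{1,\dots,n\}$ into nonempty blocks, $C_\lambda(R)=C_{(\bar\lambda_{B_1},\dots,\bar\lambda_{B_m})}\big(C_{\lambda_{B_1}}(R_{B_1}),\dots,C_{\lambda_{B_m}}(R_{B_m})\big)$. (A4) Marginal Elo-strength consistency: for all $x,y\in\mathbb{R}$, $\partial_xC_{(1,1)}(x,y)/\partial_yC_{(1,1)}(x,y)=E(x,y)/(1-E(x,y))=10^{(x-y)/400}$. *)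

(* Defs.v *)
From Stdlib Require Import Reals List Arith.
From Coquelicot Require Import Coquelicot.
Import ListNotations.
Open Scope R_scope.

(* Vectors in R^n are represented as lists of length n (index i = position i,
   0-based).  A combined rating rule is a function C : (lambda, R) |-> C_lambda(R);
   its values on lists of mismatched/zero length are irrelevant: all axioms only
   inspect lists with length lambda = length R = n >= 1 and lambda > 0. *)
Definition rule := list R -> list R -> R.

Definition lsum (l : list R) : R := fold_right Rplus 0 l.

Definition qf (r : R) : R := Rpower 10 (r / 400).
Definition qinv (s : R) : R := 400 * (ln s / ln 10).
Definition Elo (a b : R) : R := 1 / (1 + Rpower 10 ((b - a) / 400)).

Definition pos_vec (l : list R) : Prop := List.Forall (fun x => 0 < x) l.

Definition close (n : nat) (d : R) (a b : list R) : Prop :=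
  forall i, (i < n)%nat -> Rabs (nth i a 0 - nth i b 0) < d.

Definition upd (l : list R) (i : nat) (t : R) : list R :=
  firstn i l ++ t :: skipn (S i) l.

(* sub-vector x_B for the block B = { i | b i = j }, in inherited increasing order *)
Definition sub (l : list R) (b : nat -> nat) (j : nat) : list R :=
  map snd (filter (fun p => Nat.eqb (b (fst p)) j) (combine (seq 0 (length l)) l)).

Definition Ax1 (C : rule) : Prop :=
  forall (lam : list R) (r : R), lam <> nil -> pos_vec lam ->
    C lam (repeat r (length lam)) = r.

Definition Ax2 (C : rule) : Prop :=
  forall n : nat, (1 <= n)%nat ->
  (forall lam x, length lam = n -> length x = n -> pos_vec lam ->
     forall eps, 0 < eps -> exists delta, 0 < delta /\
       forall lam' x', length lam' = n -> length x' = n -> pos_vec lam' ->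
         close n delta lam' lam -> close n delta x' x ->
         Rabs (C lam' x' - C lam x) < eps)
  /\
  (forall lam, length lam = n -> pos_vec lam ->
     exists D : nat -> list R -> R,
       (forall i x, (i < n)%nat -> length x = n ->
          is_derive (fun t => C lam (upd x i t)) (nth i x 0) (D i x))
       /\ (forall i x, (i < n)%nat -> length x = n ->
          forall eps, 0 < eps -> exists delta, 0 < delta /\
            forall x', length x' = n -> close n delta x' x ->
              Rabs (D i x' - D i x) < eps)
       /\ (forall i x, (i < n)%nat -> length x = n -> 0 < D i x)).

(* (A3) recursive consistency; an ordered partition (B_1,...,B_m) of the index
   set {0,...,n-1} into nonempty blocks is encoded by a labelling b with
   b i < m for i < n and every label j < m used; block j is { i | b i = j }. *)
Definition Ax3 (C : rule) : Prop :=
  forall (n : nat) (lam x : list R), (1 <= n)%nat ->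
    length lam = n -> length x = n -> pos_vec lam ->
    forall (m : nat) (b : nat -> nat),
      (forall i, (i < n)%nat -> (b i < m)%nat) ->
      (forall j, (j < m)%nat -> exists i, (i < n)%nat /\ b i = j) ->
      C lam x =
      C (map (fun j => lsum (sub lam b j)) (seq 0 m))
        (map (fun j => C (sub lam b j) (sub x b j)) (seq 0 m)).

Definition Ax4 (C : rule) : Prop :=
  forall x y : R, exists dx dy : R,
    is_derive (fun t => C [1; 1] [t; y]) x dx /\
    is_derive (fun t => C [1; 1] [x; t]) y dy /\
    dx / dy = Elo x y / (1 - Elo x y) /\
    Elo x y / (1 - Elo x y) = Rpower 10 ((x - y) / 400).

Definition rule_a : rule := fun lam x =>
  lsum (map (fun p => fst p / lsum lam * snd p) (combine lam x)).

Definition rule_b : rule := fun lam x =>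
  if Nat.leb (length lam) 2
  then qinv (lsum (map (fun p => fst p * qf (snd p)) (combine lam x)) / lsum lam)
  else lsum (map (fun p => fst p * snd p) (combine lam x)) / lsum lam.

Definition weights (lam : list R) : list R := map (fun l => l / lsum lam) lam.
Definition entropy (w : list R) : R := - lsum (map (fun a => a * ln a) w).
Definition rule_c (eta : R) : rule := fun lam x =>
  let w := weights lam in
  qinv (lsum (map (fun p => fst p * qf (snd p)) (combine w x)) + eta * entropy w).

(* Main.v *)
Require Import Defs.
From Stdlib Require Import Reals List Arith Lra Lia.
From Coquelicot Require Import Coquelicot.
Import ListNotations.
Open Scope R_scope.

Lemma ball_R x e y : ball x e y <-> Rabs (y - x) < e.
Proof. unfold ball; simpl. unfold AbsRing_ball. simpl. unfold abs, minus, plus, opp; simpl. tauto. Qed.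

Definition cont2 (g : R -> R -> R) (a b : R) : Prop :=
  forall eps, 0 < eps -> exists d, 0 < d /\ forall u v, Rabs (u - a) < d -> Rabs (v - b) < d ->
    Rabs (g u v - g a b) < eps.

Lemma cont2_prod g a b :
  filterlim (fun z : R * R => g (fst z) (snd z)) (filter_prod (locally a) (locally b)) (locally (g a b)) ->
  cont2 g a b.
Proof.
  intros H eps Heps. apply filterlim_locally with (eps := mkposreal eps Heps) in H.
  destruct H as [Q S [e1 H1] [e2 H2] H]. simpl in *.
  exists (Rmin e1 e2). split. apply Rmin_pos; apply cond_pos.
  intros u v Hu Hv. specialize (H u v). apply ball_R in H. exact H.
  apply H1, ball_R. apply Rlt_le_trans with (1 := Hu), Rmin_l.
  apply H2, ball_R. apply Rlt_le_trans with (1 := Hv), Rmin_r.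
Qed.

Lemma cont2_plus a b : cont2 Rplus a b.
Proof. apply cont2_prod. exact (filterlim_plus (V := R_NormedModule) a b). Qed.
Lemma cont2_mult a b : cont2 Rmult a b.
Proof. apply cont2_prod. exact (filterlim_mult (K := R_AbsRing) a b). Qed.

Lemma cont2_unary h a b : continuous h a -> cont2 (fun u _ => h u) a b.
Proof.
  intros H eps Heps. apply filterlim_locally with (eps := mkposreal eps Heps) in H.
  destruct H as [e1 H1]. exists e1. split. apply cond_pos.
  intros u v Hu _. specialize (H1 u). apply ball_R in H1. exact H1. apply ball_R; exact Hu.
Qed.

Lemma cont_R (h : R -> R) a : ex_derive h a -> continuous h a.
Proof. intros H. apply (ex_derive_continuous (K := R_AbsRing) (V := R_NormedModule)). exact H. Qed.

Definition jc (n : nat) (F : list R -> list R -> R) (lam x : list R) : Prop :=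
  forall eps, 0 < eps -> exists delta, 0 < delta /\
    forall lam' x', length lam' = n -> length x' = n -> pos_vec lam' ->
      Defs.close n delta lam' lam -> Defs.close n delta x' x ->
      Rabs (F lam' x' - F lam x) < eps.

Lemma close_mono n d d' a b : d <= d' -> Defs.close n d a b -> Defs.close n d' a b.
Proof. intros H C i Hi. specialize (C i Hi). lra. Qed.

Lemma jc_const n c lam x : jc n (fun _ _ => c) lam x.
Proof. intros eps He. exists 1. split. lra. intros. rewrite Rminus_diag, Rabs_R0. lra. Qed.

Lemma jc_lam n k lam x : (k < n)%nat -> jc n (fun l _ => nth k l 0) lam x.
Proof. intros Hk eps He. exists eps. split. lra. intros l' x' _ _ _ C _. apply C, Hk. Qed.

Lemma jc_x n k lam x : (k < n)%nat -> jc n (fun _ y => nth k y 0) lam x.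
Proof. intros Hk eps He. exists eps. split. lra. intros l' x' _ _ _ _ C. apply C, Hk. Qed.

Lemma jc_op2 n g F1 F2 lam x : cont2 g (F1 lam x) (F2 lam x) -> jc n F1 lam x -> jc n F2 lam x ->
  jc n (fun l y => g (F1 l y) (F2 l y)) lam x.
Proof.
  intros Hg H1 H2 eps He. destruct (Hg eps He) as [d [Hd Hg']].
  destruct (H1 d Hd) as [d1 [Hd1 H1']]. destruct (H2 d Hd) as [d2 [Hd2 H2']].
  exists (Rmin d1 d2). split. apply Rmin_pos; auto.
  intros l' x' L1 L2 P C1 C2. apply Hg'.
  apply H1'; auto; eapply close_mono; eauto; apply Rmin_l.
  apply H2'; auto; eapply close_mono; eauto; apply Rmin_r.
Qed.

Lemma jc_plus n F1 F2 lam x : jc n F1 lam x -> jc n F2 lam x -> jc n (fun l y => F1 l y + F2 l y) lam x.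
Proof. intros; apply (jc_op2 n Rplus); auto; apply cont2_plus. Qed.
Lemma jc_mult n F1 F2 lam x : jc n F1 lam x -> jc n F2 lam x -> jc n (fun l y => F1 l y * F2 l y) lam x.
Proof. intros; apply (jc_op2 n Rmult); auto; apply cont2_mult. Qed.
Lemma jc_comp n h F lam x : continuous h (F lam x) -> jc n F lam x -> jc n (fun l y => h (F l y)) lam x.
Proof. intros Hh HF. apply (jc_op2 n (fun u _ => h u) F F); auto. apply cont2_unary; auto. Qed.
Lemma jc_opp n F lam x : jc n F lam x -> jc n (fun l y => - F l y) lam x.
Proof. intros. apply (jc_comp n Ropp); auto. apply cont_R. auto_derive. auto. Qed.
Lemma jc_inv n F lam x : F lam x <> 0 -> jc n F lam x -> jc n (fun l y => / F l y) lam x.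
Proof. intros. apply (jc_comp n Rinv); auto. apply cont_R. auto_derive. auto. Qed.
Lemma jc_div n F1 F2 lam x : F2 lam x <> 0 -> jc n F1 lam x -> jc n F2 lam x -> jc n (fun l y => F1 l y / F2 l y) lam x.
Proof. intros. unfold Rdiv. apply jc_mult; auto. apply jc_inv; auto. Qed.

Lemma jc_ext n F G lam x : (forall l y, length l = n -> length y = n -> pos_vec l -> F l y = G l y) ->
  length lam = n -> length x = n -> pos_vec lam -> jc n G lam x -> jc n F lam x.
Proof.
  intros E L1 L2 P H eps He. destruct (H eps He) as [d [Hd H']]. exists d. split; auto.
  intros. rewrite !E; auto.
Qed.

Lemma jc_sum n (s : list nat) F lam x : (forall k, In k s -> jc n (F k) lam x) ->
  jc n (fun l y => lsum (map (fun k => F k l y) s)) lam x.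
Proof.
  induction s as [|a s IH]; intros H; simpl.
  - apply jc_const.
  - apply jc_plus. apply H; simpl; auto. apply IH. intros; apply H; simpl; auto.
Qed.

Lemma lsum_seq_combine (f : R * R -> R) l y n : length l = n -> length y = n ->
  lsum (map f (combine l y)) = lsum (map (fun k => f (nth k l 0, nth k y 0)) (seq 0 n)).
Proof.
  revert y n. induction l as [|a l IH]; intros y n L1 L2; destruct y as [|b y]; simpl in *; subst; try discriminate; auto.
  simpl. f_equal. rewrite <- seq_shift, map_map. simpl. apply IH; auto.
Qed.

Lemma lsum_seq (g : R -> R) l n : length l = n ->
  lsum (map g l) = lsum (map (fun k => g (nth k l 0)) (seq 0 n)).
Proof.
  revert n. induction l as [|a l IH]; intros n L1; simpl in *; subst; auto.
  simpl. f_equal. rewrite <- seq_shift, map_map. simpl. apply IH; auto.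
Qed.

Lemma lsum_seq_id l n : length l = n -> lsum l = lsum (map (fun k => nth k l 0) (seq 0 n)).
Proof. intros. rewrite <- (lsum_seq (fun a => a) l n H), map_id. auto. Qed.

Lemma jc_sum_combine n f lam x : (forall k, (k < n)%nat -> jc n (fun l y => f l (nth k l 0, nth k y 0)) lam x) ->
  length lam = n -> length x = n -> pos_vec lam ->
  jc n (fun l y => lsum (map (f l) (combine l y))) lam x.
Proof.
  intros H L1 L2 P. apply jc_ext with (G := fun l y => lsum (map (fun k => f l (nth k l 0, nth k y 0)) (seq 0 n))); auto.
  intros; apply lsum_seq_combine; auto.
  apply jc_sum. intros k Hk. apply in_seq in Hk. apply H. lia.
Qed.

Lemma jc_sum_list n g lam x : (forall k, (k < n)%nat -> jc n (fun l y => g l (nth k l 0)) lam x) ->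
  length lam = n -> length x = n -> pos_vec lam ->
  jc n (fun l y => lsum (map (g l) l)) lam x.
Proof.
  intros H L1 L2 P. apply jc_ext with (G := fun l y => lsum (map (fun k => g l (nth k l 0)) (seq 0 n))); auto.
  intros; apply lsum_seq; auto.
  apply jc_sum. intros k Hk. apply in_seq in Hk. apply H. lia.
Qed.

Lemma jc_lsum n lam x : length lam = n -> length x = n -> pos_vec lam -> jc n (fun l y => lsum l) lam x.
Proof.
  intros L1 L2 P. apply jc_ext with (G := fun l y => lsum (map (fun k => nth k l 0) (seq 0 n))); auto.
  intros; apply lsum_seq_id; auto.
  apply jc_sum. intros k Hk. apply in_seq in Hk. apply jc_lam. lia.
Qed.
Lemma lsum_scale {A} (f : A -> R) c l : lsum (map (fun a => c * f a) l) = c * lsum (map f l).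
Proof. induction l; simpl; [ring|rewrite IHl; ring]. Qed.
Lemma lsum_plus {A} (f g : A -> R) l : lsum (map (fun a => f a + g a) l) = lsum (map f l) + lsum (map g l).
Proof. induction l; simpl; [ring|rewrite IHl; ring]. Qed.
Lemma lsum_ext_in {A} (f g : A -> R) l : (forall a, In a l -> f a = g a) -> lsum (map f l) = lsum (map g l).
Proof. intros H. f_equal. apply map_ext_in. auto. Qed.
Lemma lsum_zero {A} (l : list A) : lsum (map (fun _ => 0) l) = 0.
Proof. induction l; simpl; [ring|rewrite IHl; ring]. Qed.
Lemma lsum_nonneg {A} (f : A -> R) l : (forall a, In a l -> 0 <= f a) -> 0 <= lsum (map f l).
Proof. induction l; simpl; intros H. lra. assert (0 <= f a) by auto. assert (0 <= lsum (map f l)) by auto. lra. Qed.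
Lemma lsum_pos {A} (f : A -> R) l : l <> nil -> (forall a, In a l -> 0 < f a) -> 0 < lsum (map f l).
Proof. destruct l as [|a l]. congruence. intros _ H. simpl.
  assert (0 < f a) by (apply H; simpl; auto). assert (0 <= lsum (map f l)).
  apply lsum_nonneg. intros; apply Rlt_le, H; simpl; auto. lra. Qed.
Lemma lsum_ge_elt l a : pos_vec l -> In a l -> a <= lsum l.
Proof. unfold pos_vec. rewrite Forall_forall. induction l as [|c l IH]; simpl; intros P H. destruct H.
  assert (0 <= lsum l). rewrite <- (map_id l). apply lsum_nonneg. intros. apply Rlt_le, P; auto.
  assert (0 < c) by auto.
  destruct H. subst; lra. assert (a <= lsum l) by (apply IH; auto). lra. Qed.
Lemma lsum_pos_vec l : pos_vec l -> l <> nil -> 0 < lsum l.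
Proof. intros P H. rewrite <- (map_id l). apply lsum_pos; auto. intros. unfold pos_vec in P. rewrite Forall_forall in P. auto. Qed.

Lemma combine_map_same {A B C} (f : A -> B) (g : A -> C) l : combine (map f l) (map g l) = map (fun a => (f a, g a)) l.
Proof. induction l; simpl; f_equal; auto. Qed.
Lemma combine_map_l {A B C} (f : A -> C) (l : list A) (y : list B) : combine (map f l) y = map (fun p => (f (fst p), snd p)) (combine l y).
Proof. revert y; induction l; destruct y; simpl; f_equal; auto. Qed.
Lemma map_combine_same {A B} (g : A -> B) l : map (fun p => g (fst p)) (combine l l) = map g l.
Proof. induction l; simpl; f_equal; auto. Qed.
Lemma map_snd_combine_seq {A} (l : list A) s : map snd (combine (seq s (length l)) l) = l.
Proof. revert s; induction l; simpl; intros; f_equal; auto. Qed.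

Lemma sub_repr_gen (l y : list R) b j s : length l = length y ->
  map snd (filter (fun p => Nat.eqb (b (fst p)) j) (combine (seq s (length l)) l)) =
  map (fun p => fst (snd p)) (filter (fun p => Nat.eqb (b (fst p)) j) (combine (seq s (length l)) (combine l y))).
Proof. revert y s; induction l as [|a l IH]; intros [|c y] s L; simpl in *; try discriminate; auto.
  destruct (b s =? j); simpl; try f_equal; auto. Qed.
Lemma sub_repr_gen2 (l y : list R) b j s : length l = length y ->
  map snd (filter (fun p => Nat.eqb (b (fst p)) j) (combine (seq s (length y)) y)) =
  map (fun p => snd (snd p)) (filter (fun p => Nat.eqb (b (fst p)) j) (combine (seq s (length l)) (combine l y))).
Proof. revert y s; induction l as [|a l IH]; intros [|c y] s L; simpl in *; try discriminate; auto.
  destruct (b s =? j); simpl; try f_equal; auto. Qed.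

Lemma combine_sub (l y : list R) b j : length l = length y ->
  combine (sub l b j) (sub y b j) = map snd (filter (fun p => Nat.eqb (b (fst p)) j) (combine (seq 0 (length l)) (combine l y))).
Proof. intros L. unfold sub. rewrite (sub_repr_gen l y b j 0 L), (sub_repr_gen2 l y b j 0 L).
  rewrite combine_map_same. apply map_ext. intros [? [? ?]]; auto. Qed.

Lemma lsum_indicator k c s m : (s <= k < s + m)%nat ->
  lsum (map (fun j => if Nat.eqb k j then c else 0) (seq s m)) = c.
Proof. revert s. induction m; intros s H. lia. simpl.
  destruct (Nat.eqb_spec k s).
  - subst. rewrite (lsum_ext_in _ (fun _ => 0)). rewrite lsum_zero. ring.
    intros a Ha. apply in_seq in Ha. destruct (Nat.eqb_spec s a); auto. lia.
  - rewrite IHm. ring. lia. Qed.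

Lemma partition {A} (b : nat -> nat) m (h : nat * A -> R) L : (forall p, In p L -> (b (fst p) < m)%nat) ->
  lsum (map h L) = lsum (map (fun j => lsum (map h (filter (fun p => Nat.eqb (b (fst p)) j) L))) (seq 0 m)).
Proof. induction L as [|p L IH]; intros H; simpl.
  - rewrite lsum_zero. auto.
  - rewrite (lsum_ext_in _ (fun j => (if Nat.eqb (b (fst p)) j then h p else 0) +
        lsum (map h (filter (fun p => Nat.eqb (b (fst p)) j) L)))).
    rewrite lsum_plus, lsum_indicator, IH; auto. intros; apply H; simpl; auto.
    assert (b (fst p) < m)%nat by (apply H; simpl; auto). lia.
    intros j _. destruct (Nat.eqb (b (fst p)) j); simpl; ring. Qed.

Lemma part_pair (lam x : list R) n m b (h : R * R -> R) : length lam = n -> length x = n ->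
  (forall i, (i < n)%nat -> (b i < m)%nat) ->
  lsum (map h (combine lam x)) = lsum (map (fun j => lsum (map h (combine (sub lam b j) (sub x b j)))) (seq 0 m)).
Proof. intros L1 L2 Hb.
  assert (E : combine lam x = map snd (combine (seq 0 (length lam)) (combine lam x))).
  { rewrite <- map_snd_combine_seq with (s := 0%nat) at 1. f_equal. f_equal. f_equal.
    rewrite length_combine. lia. }
  rewrite E, map_map, (partition b m).
  - apply lsum_ext_in. intros j _. rewrite combine_sub by lia. rewrite map_map. auto.
  - intros [i p] Hp. apply in_combine_l in Hp. apply in_seq in Hp. simpl. apply Hb. lia.
Qed.

Lemma part_single (lam : list R) n m b (g : R -> R) : length lam = n ->
  (forall i, (i < n)%nat -> (b i < m)%nat) ->
  lsum (map g lam) = lsum (map (fun j => lsum (map g (sub lam b j))) (seq 0 m)).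
Proof. intros L Hb. rewrite <- map_combine_same. rewrite (part_pair lam lam n m b); auto.
  apply lsum_ext_in. intros. rewrite map_combine_same. auto. Qed.

Lemma in_sub a l b j : In a (sub l b j) -> In a l.
Proof. unfold sub. intros H. apply in_map_iff in H. destruct H as [[i c] [E H]]. simpl in E; subst.
  apply filter_In in H. destruct H as [H _]. apply in_combine_r in H. auto. Qed.

Lemma nth_in_sub l b i : (i < length l)%nat -> In (nth i l 0) (sub l b (b i)).
Proof. intros Hi. unfold sub. apply in_map_iff. exists (i, nth i l 0). split; auto.
  apply filter_In. split. 2: simpl; apply Nat.eqb_refl.
  assert (E : nth i (combine (seq 0 (length l)) l) (0%nat, 0) = (i, nth i l 0)).
  { rewrite combine_nth. rewrite seq_nth; auto. rewrite length_seq; auto. }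
  rewrite <- E. apply nth_In. rewrite length_combine, length_seq. lia. Qed.

Lemma pos_sub l b j : pos_vec l -> pos_vec (sub l b j).
Proof. unfold pos_vec. rewrite !Forall_forall. intros P a H. apply P. eapply in_sub; eauto. Qed.
Lemma ln10_pos : 0 < ln 10.
Proof. rewrite <- ln_1. apply ln_increasing; lra. Qed.
Lemma qf_pos t : 0 < qf t.
Proof. unfold qf, Rpower. apply exp_pos. Qed.
Lemma qf_qinv z : 0 < z -> qf (qinv z) = z.
Proof. intros Hz. unfold qf, qinv, Rpower. replace (400 * (ln z / ln 10) / 400 * ln 10) with (ln z).
  apply exp_ln; auto. field. apply Rgt_not_eq, ln10_pos. Qed.
Lemma qinv_qf r : qinv (qf r) = r.
Proof. unfold qf, qinv, Rpower. rewrite ln_exp. field. apply Rgt_not_eq, ln10_pos. Qed.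
Lemma qf_ratio x y : qf x / qf y = Rpower 10 ((x - y) / 400).
Proof. unfold qf, Rpower. unfold Rdiv at 1. rewrite <- exp_Ropp, <- exp_plus. f_equal. field. Qed.
Lemma Elo_ratio x y : Elo x y / (1 - Elo x y) = Rpower 10 ((x - y) / 400).
Proof. unfold Elo, Rpower. replace ((y - x) / 400 * ln 10) with (- ((x - y) / 400 * ln 10)) by field.
  rewrite exp_Ropp. assert (0 < exp ((x - y) / 400 * ln 10)) by apply exp_pos. field. lra. Qed.
Lemma deriv_qinv K c t0 : 0 < K + c * qf t0 ->
  is_derive (fun t => qinv (K + c * qf t)) t0 (c * qf t0 / (K + c * qf t0)).
Proof. intros H. unfold qinv, qf, Rpower in *. auto_derive. auto.
  assert (ln 10 > 0) by apply ln10_pos. change (t0 * / 400) with (t0 / 400). field. split; lra. Qed.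
Lemma cont_qf a : continuous qf a.
Proof. apply cont_R. unfold qf, Rpower. auto_derive. auto. Qed.
Lemma cont_qinv a : 0 < a -> continuous qinv a.
Proof. intros. apply cont_R. unfold qinv. auto_derive. auto. Qed.
Lemma cont_ln a : 0 < a -> continuous ln a.
Proof. intros. apply cont_R. auto_derive. auto. Qed.
Lemma upd_sum (f : R * R -> R) l y i t : length l = length y -> (i < length y)%nat ->
  lsum (map f (combine l (upd y i t))) = lsum (map f (combine l y)) - f (nth i l 0, nth i y 0) + f (nth i l 0, t).
Proof. revert l i. induction y as [|a y IH]; intros [|c l] i L Hi; simpl in *; try lia.
  destruct i as [|i].
  - unfold upd. simpl. ring.
  - assert (E : upd (a :: y) (S i) t = a :: upd y i t) by reflexivity. rewrite E. simpl.
    rewrite IH by lia. ring. Qed.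

Lemma sum_repeat (g : R -> R) l r : lsum (map (fun p => fst p * g (snd p)) (combine l (repeat r (length l)))) = g r * lsum l.
Proof. induction l; simpl; [ring|rewrite IHl; ring]. Qed.

Lemma nonnil {A} (l : list A) n : length l = n -> (1 <= n)%nat -> l <> nil.
Proof. intros; destruct l; simpl in *; [lia|congruence]. Qed.

Lemma nth_pos l k : pos_vec l -> (k < length l)%nat -> 0 < nth k l 0.
Proof. intros P Hk. unfold pos_vec in P. rewrite Forall_nth in P. apply P; auto. Qed.

Lemma block_pos lam n m b j : length lam = n -> pos_vec lam ->
  (forall j, (j < m)%nat -> exists i, (i < n)%nat /\ b i = j) -> (j < m)%nat -> 0 < lsum (sub lam b j).
Proof. intros L P Hs Hj. destruct (Hs j Hj) as [i [Hi E]]. subst j.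
  apply Rlt_le_trans with (nth i lam 0). apply nth_pos; auto; lia.
  apply lsum_ge_elt. apply pos_sub; auto. apply nth_in_sub. lia. Qed.

Lemma part_id (lam : list R) n m b : length lam = n -> (forall i, (i < n)%nat -> (b i < m)%nat) ->
  lsum lam = lsum (map (fun j => lsum (sub lam b j)) (seq 0 m)).
Proof. intros L Hb. rewrite <- (map_id lam) at 1. rewrite (part_single lam n m b (fun a => a)); auto.
  apply lsum_ext_in. intros. rewrite map_id. auto. Qed.

Lemma jc_to_xcont n (G : list R -> R) lam x : jc n (fun _ y => G y) lam x -> pos_vec lam -> length lam = n ->
  forall eps, 0 < eps -> exists delta, 0 < delta /\ forall x', length x' = n -> Defs.close n delta x' x -> Rabs (G x' - G x) < eps.
Proof. intros H P L eps He. destruct (H eps He) as [d [Hd H']]. exists d. split; auto.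
  intros x' L' C. apply (H' lam x'); auto. intros i Hi. rewrite Rminus_diag, Rabs_R0. auto. Qed.

Lemma jc_sum_combine_fixed n f lam0 lam x : (forall k, (k < n)%nat -> jc n (fun l y => f (nth k lam0 0, nth k y 0)) lam x) ->
  length lam0 = n -> length lam = n -> length x = n -> pos_vec lam ->
  jc n (fun l y => lsum (map f (combine lam0 y))) lam x.
Proof.
  intros H L0 L1 L2 P. apply jc_ext with (G := fun l y => lsum (map (fun k => f (nth k lam0 0, nth k y 0)) (seq 0 n))); auto.
  intros; apply lsum_seq_combine; auto.
  apply jc_sum. intros k Hk. apply in_seq in Hk. apply H. lia.
Qed.

Definition Ta (l y : list R) := lsum (map (fun p => fst p * snd p) (combine l y)).
Lemma rule_a_eq l y : rule_a l y = / lsum l * Ta l y.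
Proof. unfold rule_a, Ta. rewrite <- lsum_scale. apply lsum_ext_in. intros. unfold Rdiv. ring. Qed.

Lemma rule_a_Ax1 : Ax1 rule_a.
Proof. intros lam r Hn P. rewrite rule_a_eq. unfold Ta.
  rewrite (sum_repeat (fun a => a)). assert (0 < lsum lam) by (apply lsum_pos_vec; auto). field. lra. Qed.

Lemma rule_a_Ax3 : Ax3 rule_a.
Proof. intros n lam x Hn L1 L2 P m b Hb Hs.
  rewrite (rule_a_eq (map _ _)). unfold Ta. rewrite combine_map_same, map_map. cbn [fst snd].
  rewrite (lsum_ext_in (fun j => lsum (sub lam b j) * rule_a (sub lam b j) (sub x b j)) (fun j => Ta (sub lam b j) (sub x b j))).
  - rewrite <- (part_id lam n m b) by auto. rewrite rule_a_eq. f_equal. unfold Ta.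
    rewrite (part_pair lam x n m b); auto.
  - intros j Hj. apply in_seq in Hj. rewrite rule_a_eq.
    assert (0 < lsum (sub lam b j)) by (apply (block_pos lam n m b); auto; lia). field. lra.
Qed.

Lemma rule_a_Ax2 : Ax2 rule_a.
Proof. intros n Hn. split.
  - intros lam x L1 L2 P. assert (0 < lsum lam) by (apply lsum_pos_vec; auto; eapply nonnil; eauto).
    change (jc n rule_a lam x). unfold rule_a.
    apply (jc_sum_combine n (fun l p => fst p / lsum l * snd p)); auto.
    intros k Hk. cbn [fst snd]. apply jc_mult. apply jc_div. lra. apply jc_lam; auto. apply jc_lsum; auto.
    apply jc_x; auto.
  - intros lam L P. assert (0 < lsum lam) by (apply lsum_pos_vec; auto; eapply nonnil; eauto).
    exists (fun i _ => nth i lam 0 / lsum lam). split; [|split].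
    + intros i x Hi Lx. unfold rule_a.
      apply is_derive_ext with (f := fun t => lsum (map (fun p => fst p / lsum lam * snd p) (combine lam x))
         - nth i lam 0 / lsum lam * nth i x 0 + nth i lam 0 / lsum lam * t).
      intros t. rewrite upd_sum by lia. reflexivity.
      auto_derive. auto. ring.
    + intros i x _ _ eps He. exists 1. split. lra. intros. rewrite Rminus_diag, Rabs_R0. auto.
    + intros i x Hi _. apply Rdiv_lt_0_compat; auto. apply nth_pos; auto. lia.
Qed.

Lemma rule_a_not_Ax4 : ~ Ax4 rule_a.
Proof. intros H. destruct (H 400 0) as [dx [dy [Hx [Hy [E1 E2]]]]].
  assert (Hx' : is_derive (fun t => rule_a [1; 1] [t; 0]) 400 (1/2)).
  { unfold rule_a. simpl. auto_derive. auto. field. }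
  assert (Hy' : is_derive (fun t => rule_a [1; 1] [400; t]) 0 (1/2)).
  { unfold rule_a. simpl. auto_derive. auto. field. }
  apply is_derive_unique in Hx, Hx', Hy, Hy'.
  assert (dx = 1/2) by (rewrite <- Hx; exact Hx'). assert (dy = 1/2) by (rewrite <- Hy; exact Hy'). subst.
  rewrite <- E1 in E2. replace ((400 - 0) / 400) with 1 in E2 by field.
  rewrite Rpower_1 in E2 by lra. rewrite Hx', Hy' in E2. lra. Qed.
Definition Xc (eta : R) (l y : list R) :=
  lsum (map (fun p => fst p * qf (snd p)) (combine (weights l) y)) + eta * entropy (weights l).
Lemma rule_c_X eta l y : rule_c eta l y = qinv (Xc eta l y).
Proof. reflexivity. Qed.
Lemma Xc_unf eta l y : Xc eta l y = lsum (map (fun p => fst p / lsum l * qf (snd p)) (combine l y)) +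
   eta * - lsum (map (fun a => a / lsum l * ln (a / lsum l)) l).
Proof. unfold Xc, weights, entropy. rewrite combine_map_l, !map_map. reflexivity. Qed.
Definition Qc (l y : list R) := lsum (map (fun p => fst p * qf (snd p)) (combine l y)).
Definition Nc (l : list R) := lsum (map (fun a => a * ln a) l).

Lemma rc_eq eta l y : pos_vec l -> l <> nil ->
  Xc eta l y = / lsum l * (Qc l y - eta * Nc l + eta * (lsum l * ln (lsum l))).
Proof. intros P Hn. assert (HS : 0 < lsum l) by (apply lsum_pos_vec; auto).
  rewrite Xc_unf. unfold Qc, Nc.
  rewrite (lsum_ext_in (fun p => fst p / lsum l * qf (snd p)) (fun p => / lsum l * (fst p * qf (snd p)))).
  2: intros; unfold Rdiv; ring.
  rewrite (lsum_ext_in (fun a => a / lsum l * ln (a / lsum l)) (fun a => / lsum l * (a * ln a) + (- ln (lsum l) / lsum l) * a)).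
  2: { intros a Ha. unfold pos_vec in P. rewrite Forall_forall in P. rewrite ln_div; auto. field. lra. }
  rewrite lsum_plus, !lsum_scale, map_id. field. lra. Qed.

Lemma Qc_pos l y : pos_vec l -> l <> nil -> length y = length l -> 0 < Qc l y.
Proof. intros P Hn L. unfold Qc. apply lsum_pos.
  destruct l; [congruence|destruct y; simpl in *; [lia|congruence]].
  intros [a c] H. apply in_combine_l in H. unfold pos_vec in P. rewrite Forall_forall in P. simpl.
  apply Rmult_lt_0_compat; auto. apply qf_pos. Qed.

Lemma Xc_pos eta l y : 0 < eta -> pos_vec l -> l <> nil -> length y = length l -> 0 < Xc eta l y.
Proof. intros He P Hn L. assert (HS : 0 < lsum l) by (apply lsum_pos_vec; auto).
  rewrite rc_eq; auto. apply Rmult_lt_0_compat. apply Rinv_0_lt_compat; auto.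
  assert (0 < Qc l y) by (apply Qc_pos; auto).
  assert (0 <= lsum l * ln (lsum l) - Nc l).
  { replace (lsum l * ln (lsum l) - Nc l) with (lsum (map (fun a => a * (ln (lsum l) - ln a)) l)).
    apply lsum_nonneg. intros a Ha. unfold pos_vec in P. rewrite Forall_forall in P.
    assert (ln a <= ln (lsum l)). apply ln_le; auto. apply lsum_ge_elt; auto. unfold pos_vec; rewrite Forall_forall; auto.
    assert (0 < a) by auto. nra.
    unfold Nc. rewrite (lsum_ext_in (fun a => a * (ln (lsum l) - ln a)) (fun a => ln (lsum l) * a + (-1) * (a * ln a))).
    rewrite lsum_plus, !lsum_scale, map_id. ring. intros; ring. }
  nra. Qed.

Lemma rule_c_Ax3 eta : 0 < eta -> Ax3 (rule_c eta).
Proof. intros He n lam x Hn L1 L2 P m b Hb Hs.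
  assert (Hm : (1 <= m)%nat). { assert (b 0%nat < m)%nat by (apply Hb; lia). lia. }
  assert (HSj : forall j, In j (seq 0 m) -> 0 < lsum (sub lam b j)).
  { intros j Hj. apply in_seq in Hj. apply (block_pos lam n m b); auto; lia. }
  assert (Hlj : forall j, length (sub x b j) = length (sub lam b j)).
  { intros j. unfold sub. rewrite (sub_repr_gen lam x b j 0), (sub_repr_gen2 lam x b j 0) by lia.
    rewrite !length_map. reflexivity. }
  assert (Hnj : forall j, In j (seq 0 m) -> sub lam b j <> nil).
  { intros j Hj E. specialize (HSj j Hj). rewrite E in HSj. simpl in HSj. lra. }
  rewrite !rule_c_X. f_equal.
  set (lam' := map (fun j => lsum (sub lam b j)) (seq 0 m)).
  set (x' := map (fun j => rule_c eta (sub lam b j) (sub x b j)) (seq 0 m)).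
  assert (Pl : pos_vec lam'). { unfold pos_vec, lam'. rewrite Forall_forall. intros a Ha.
    apply in_map_iff in Ha. destruct Ha as [j [E Hj]]. subst. auto. }
  assert (Nl : lam' <> nil). { unfold lam'. destruct m; [lia|]. simpl. congruence. }
  assert (Nlam : lam <> nil) by (eapply nonnil; eauto).
  rewrite (rc_eq eta lam x), (rc_eq eta lam' x'); auto.
  assert (ES : lsum lam' = lsum lam) by (unfold lam'; symmetry; apply (part_id lam n m b); auto).
  rewrite ES.
  assert (EQ : Qc lam' x' = Qc lam x - eta * Nc lam + eta * Nc lam').
  { unfold Qc, lam', x'. rewrite combine_map_same, map_map. cbn [fst snd].
    rewrite (lsum_ext_in (fun j => lsum (sub lam b j) * qf (rule_c eta (sub lam b j) (sub x b j)))
       (fun j => Qc (sub lam b j) (sub x b j) + (- eta) * Nc (sub lam b j) + eta * (lsum (sub lam b j) * ln (lsum (sub lam b j))))).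
    2: { intros j Hj. assert (Hp := pos_sub lam b j P). assert (Hn' := Hnj j Hj). specialize (HSj j Hj).
         rewrite rule_c_X, qf_qinv by (apply Xc_pos; auto). rewrite rc_eq by auto. field. lra. }
    rewrite !lsum_plus, !lsum_scale. unfold Qc, Nc.
    rewrite <- (part_pair lam x n m b), <- (part_single lam n m b); auto. rewrite map_map. ring. }
  rewrite EQ. ring. Qed.
Lemma rule_c_deriv eta lam x i : 0 < eta -> pos_vec lam -> length lam = length x -> (i < length x)%nat ->
  is_derive (fun t => rule_c eta lam (upd x i t)) (nth i x 0) (nth i lam 0 / lsum lam * qf (nth i x 0) / Xc eta lam x).
Proof. intros He P L Hi. assert (Nl : lam <> nil) by (destruct lam; simpl in *; [lia|congruence]).
  apply is_derive_ext with (f := fun t => qinv ((Xc eta lam x - nth i lam 0 / lsum lam * qf (nth i x 0)) + nth i lam 0 / lsum lam * qf t)).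
  { intros t. rewrite rule_c_X. f_equal. rewrite !Xc_unf. rewrite upd_sum by lia. cbn [fst snd]. ring. }
  pose proof (deriv_qinv (Xc eta lam x - nth i lam 0 / lsum lam * qf (nth i x 0)) (nth i lam 0 / lsum lam) (nth i x 0)) as HD.
  replace (Xc eta lam x - nth i lam 0 / lsum lam * qf (nth i x 0) + nth i lam 0 / lsum lam * qf (nth i x 0)) with (Xc eta lam x) in HD by ring.
  apply HD. apply Xc_pos; auto. Qed.

Lemma rule_c_Ax2 eta : 0 < eta -> Ax2 (rule_c eta).
Proof. intros He n Hn. split.
  - intros lam x L1 L2 P. assert (Nl : lam <> nil) by (eapply nonnil; eauto).
    assert (HS : 0 < lsum lam) by (apply lsum_pos_vec; auto).
    change (jc n (rule_c eta) lam x).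
    apply jc_ext with (G := fun l y => qinv (lsum (map ((fun l p => fst p / lsum l * qf (snd p)) l) (combine l y)) +
        eta * - lsum (map ((fun l a => a / lsum l * ln (a / lsum l)) l) l))); auto.
    { intros; rewrite rule_c_X, Xc_unf; reflexivity. }
    apply (jc_comp n qinv).
    { apply cont_qinv. cbv beta. rewrite <- Xc_unf. apply Xc_pos; auto; lia. }
    apply jc_plus.
    + apply jc_sum_combine; auto. intros k Hk. cbv beta. cbn [fst snd].
      apply jc_mult. apply jc_div. lra. apply jc_lam; auto. apply jc_lsum; auto.
      apply (jc_comp n qf). apply cont_qf. apply jc_x; auto.
    + apply jc_mult. apply jc_const. apply jc_opp. apply jc_sum_list; auto. intros k Hk. cbv beta.
      assert (0 < nth k lam 0) by (apply nth_pos; auto; lia).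
      apply jc_mult. apply jc_div. lra. apply jc_lam; auto. apply jc_lsum; auto.
      apply (jc_comp n ln). apply cont_ln. apply Rdiv_lt_0_compat; auto.
      apply jc_div. lra. apply jc_lam; auto. apply jc_lsum; auto.
  - intros lam L P. assert (Nl : lam <> nil) by (eapply nonnil; eauto).
    assert (HS : 0 < lsum lam) by (apply lsum_pos_vec; auto).
    exists (fun i x => nth i lam 0 / lsum lam * qf (nth i x 0) / Xc eta lam x). split; [|split].
    + intros i x Hi Lx. apply rule_c_deriv; auto; lia.
    + intros i x Hi Lx.
      apply (jc_to_xcont n (fun y => nth i lam 0 / lsum lam * qf (nth i y 0) / Xc eta lam y) lam x); auto.
      assert (0 < Xc eta lam x) by (apply Xc_pos; auto; lia).
      apply jc_div. lra. apply jc_mult. apply jc_const. apply (jc_comp n qf). apply cont_qf. apply jc_x; auto.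
      apply jc_ext with (G := fun l y => lsum (map (fun p => fst p / lsum lam * qf (snd p)) (combine lam y)) +
        eta * - lsum (map (fun a => a / lsum lam * ln (a / lsum lam)) lam)); auto.
      { intros; apply Xc_unf. }
      apply jc_plus. 2: apply jc_const.
      apply jc_sum_combine_fixed; auto. intros k Hk. cbn [fst snd].
      apply jc_mult. apply jc_const. apply (jc_comp n qf). apply cont_qf. apply jc_x; auto.
    + intros i x Hi Lx. assert (0 < Xc eta lam x) by (apply Xc_pos; auto; lia).
      assert (0 < nth i lam 0) by (apply nth_pos; auto; lia).
      apply Rdiv_lt_0_compat; auto. apply Rmult_lt_0_compat. apply Rdiv_lt_0_compat; auto. apply qf_pos.
Qed.

Lemma rule_c_Ax4 eta : 0 < eta -> Ax4 (rule_c eta).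
Proof. intros He x y.
  exists (nth 0 [1;1] 0 / lsum [1;1] * qf (nth 0 [x;y] 0) / Xc eta [1;1] [x;y]).
  exists (nth 1 [1;1] 0 / lsum [1;1] * qf (nth 1 [x;y] 0) / Xc eta [1;1] [x;y]).
  assert (P : pos_vec [1;1]) by (repeat constructor; lra).
  split; [|split; [|split]].
  - exact (rule_c_deriv eta [1;1] [x;y] 0 He P eq_refl ltac:(simpl; lia)).
  - exact (rule_c_deriv eta [1;1] [x;y] 1 He P eq_refl ltac:(simpl; lia)).
  - rewrite Elo_ratio, <- qf_ratio. assert (0 < Xc eta [1;1] [x;y]) by (apply Xc_pos; auto; congruence).
    assert (0 < qf x) by apply qf_pos. assert (0 < qf y) by apply qf_pos.
    cbn [nth lsum fold_right]. field. repeat split; lra.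
  - apply Elo_ratio.
Qed.

Lemma rule_c_not_Ax1 eta : 0 < eta -> ~ Ax1 (rule_c eta).
Proof. intros He H. assert (P : pos_vec [1;1]) by (repeat constructor; lra).
  specialize (H [1;1] 0 ltac:(congruence) P). cbn [length repeat] in H.
  rewrite rule_c_X, rc_eq in H by (auto; congruence).
  unfold Qc, Nc in H. cbn [lsum fold_right map combine fst snd] in H.
  replace (qf 0) with 1 in H by (unfold qf, Rpower; replace (0/400*ln 10) with 0 by field; rewrite exp_0; auto).
  rewrite ln_1 in H.
  assert (0 < ln 2) by (rewrite <- ln_1; apply ln_increasing; lra).
  set (X := / (1 + (1 + 0)) * (1 * 1 + (1 * 1 + 0) - eta * (1 * 0 + (1 * 0 + 0)) + eta * ((1 + (1 + 0)) * ln (1 + (1 + 0))))) in H.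
  assert (HX : 1 < X). { unfold X. replace (1 + (1 + 0)) with 2 by ring.
    assert (0 < eta * ln 2) by nra. field_simplify. lra. }
  unfold qinv in H. assert (0 < ln X) by (rewrite <- ln_1; apply ln_increasing; lra).
  assert (0 < ln X / ln 10) by (apply Rdiv_lt_0_compat; auto; apply ln10_pos). lra. Qed.
Lemma rule_b_not_Ax3 : ~ Ax3 rule_b.
Proof. intros H.
  specialize (H 3%nat [1;1;1] [0;0;400] ltac:(lia) eq_refl eq_refl ltac:(repeat constructor; lra)
     2%nat (fun i => if Nat.eqb i 0 then 0%nat else 1%nat)).
  assert (Hb : forall i, (i < 3)%nat -> ((fun i => if Nat.eqb i 0 then 0%nat else 1%nat) i < 2)%nat).
  { intros i _. destruct (Nat.eqb i 0); lia. }
  assert (Hs : forall j, (j < 2)%nat -> exists i, (i < 3)%nat /\ (fun i => if Nat.eqb i 0 then 0%nat else 1%nat) i = j).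
  { intros j Hj. destruct j as [|[|j]]. exists 0%nat; split; [lia|reflexivity]. exists 1%nat; split; [lia|reflexivity]. lia. }
  specialize (H Hb Hs). clear Hb Hs.
  cbn -[qinv qf Rdiv] in H.
  assert (Q0 : qf 0 = 1) by (unfold qf, Rpower; replace (0/400*ln 10) with 0 by field; apply exp_0).
  assert (Q4 : qf 400 = 10) by (unfold qf; replace (400/400) with 1 by field; apply Rpower_1; lra).
  rewrite Q0, Q4 in H.
  rewrite !qf_qinv in H by (apply Rdiv_lt_0_compat; lra).
  match type of H with ?l = qinv ?a => replace a with 4 in H by field; replace l with (400/3) in H by field end.
  unfold qinv in H. assert (Hl : ln 10 > 0) by apply ln10_pos.
  assert (H1 : ln 4 / ln 10 = 1/3) by lra.
  assert (H2 : ln 4 = 1/3 * ln 10) by (rewrite <- H1; field; lra).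
  assert (E : 3 * ln 4 = ln 10) by lra.
  replace (3 * ln 4) with (ln 64) in E. apply ln_inv in E; lra.
  replace 64 with (4 * (4 * 4)) by lra. rewrite !ln_mult by lra. ring.
Qed.
Lemma rule_b_small l y : (length l <= 2)%nat -> rule_b l y = qinv (Qc l y / lsum l).
Proof. intros H. unfold rule_b. apply Nat.leb_le in H. rewrite H. reflexivity. Qed.
Lemma rule_b_big l y : (2 < length l)%nat -> rule_b l y = Ta l y / lsum l.
Proof. intros H. unfold rule_b. destruct (Nat.leb_spec (length l) 2). lia. reflexivity. Qed.

Lemma rule_b_Ax1 : Ax1 rule_b.
Proof. intros lam r Hn P. assert (0 < lsum lam) by (apply lsum_pos_vec; auto).
  destruct (le_lt_dec (length lam) 2).
  - rewrite rule_b_small; auto. unfold Qc. rewrite sum_repeat.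
    replace (qf r * lsum lam / lsum lam) with (qf r) by (field; lra). apply qinv_qf.
  - rewrite rule_b_big; auto. unfold Ta. rewrite (sum_repeat (fun a => a)). field. lra.
Qed.

Lemma rule_b_deriv_small lam x i : pos_vec lam -> length lam = length x -> (length lam <= 2)%nat -> (i < length x)%nat ->
  is_derive (fun t => rule_b lam (upd x i t)) (nth i x 0) (nth i lam 0 * qf (nth i x 0) / Qc lam x).
Proof. intros P L L2 Hi. assert (Nl : lam <> nil) by (destruct lam; simpl in *; [lia|congruence]).
  assert (HS : 0 < lsum lam) by (apply lsum_pos_vec; auto).
  assert (HQ : 0 < Qc lam x) by (apply Qc_pos; auto).
  apply is_derive_ext with (f := fun t => qinv ((Qc lam x - nth i lam 0 * qf (nth i x 0)) / lsum lam + nth i lam 0 / lsum lam * qf t)).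
  { intros t. rewrite rule_b_small by auto. f_equal. unfold Qc. rewrite upd_sum by lia. cbn [fst snd]. field. lra. }
  replace (nth i lam 0 * qf (nth i x 0) / Qc lam x) with
    (nth i lam 0 / lsum lam * qf (nth i x 0) / ((Qc lam x - nth i lam 0 * qf (nth i x 0)) / lsum lam + nth i lam 0 / lsum lam * qf (nth i x 0))).
  apply deriv_qinv. replace ((Qc lam x - nth i lam 0 * qf (nth i x 0)) / lsum lam + nth i lam 0 / lsum lam * qf (nth i x 0)) with (Qc lam x / lsum lam) by (field; lra).
  apply Rdiv_lt_0_compat; auto.
  field. lra. Qed.

Lemma rule_b_Ax2 : Ax2 rule_b.
Proof. intros n Hn. destruct (le_lt_dec n 2) as [Hs|Hb]; split.
  - intros lam x L1 L2 P. assert (Nl : lam <> nil) by (eapply nonnil; eauto).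
    assert (HS : 0 < lsum lam) by (apply lsum_pos_vec; auto).
    assert (HQ : 0 < Qc lam x) by (apply Qc_pos; auto; lia).
    change (jc n rule_b lam x).
    apply jc_ext with (G := fun l y => qinv (Qc l y / lsum l)); auto.
    { intros l y Ll Ly _. apply rule_b_small. lia. }
    apply (jc_comp n qinv). apply cont_qinv. apply Rdiv_lt_0_compat; auto.
    apply jc_div. lra. unfold Qc. apply (jc_sum_combine n (fun _ p => fst p * qf (snd p))); auto.
    intros k Hk. cbn [fst snd]. apply jc_mult. apply jc_lam; auto. apply (jc_comp n qf). apply cont_qf. apply jc_x; auto.
    apply jc_lsum; auto.
  - intros lam L P. assert (Nl : lam <> nil) by (eapply nonnil; eauto).
    assert (HS : 0 < lsum lam) by (apply lsum_pos_vec; auto).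
    exists (fun i x => nth i lam 0 * qf (nth i x 0) / Qc lam x). split; [|split].
    + intros i x Hi Lx. apply rule_b_deriv_small; auto; lia.
    + intros i x Hi Lx.
      apply (jc_to_xcont n (fun y => nth i lam 0 * qf (nth i y 0) / Qc lam y) lam x); auto.
      assert (0 < Qc lam x) by (apply Qc_pos; auto; lia).
      apply jc_div. lra. apply jc_mult. apply jc_const. apply (jc_comp n qf). apply cont_qf. apply jc_x; auto.
      unfold Qc. apply jc_sum_combine_fixed; auto. intros k Hk. cbn [fst snd].
      apply jc_mult. apply jc_const. apply (jc_comp n qf). apply cont_qf. apply jc_x; auto.
    + intros i x Hi Lx. assert (0 < Qc lam x) by (apply Qc_pos; auto; lia).
      assert (0 < nth i lam 0) by (apply nth_pos; auto; lia).
      apply Rdiv_lt_0_compat; auto. apply Rmult_lt_0_compat; auto. apply qf_pos.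
  - intros lam x L1 L2 P. assert (Nl : lam <> nil) by (eapply nonnil; eauto).
    assert (HS : 0 < lsum lam) by (apply lsum_pos_vec; auto).
    change (jc n rule_b lam x).
    apply jc_ext with (G := fun l y => Ta l y / lsum l); auto.
    { intros l y Ll Ly _. apply rule_b_big. lia. }
    apply jc_div. lra. unfold Ta. apply (jc_sum_combine n (fun _ p => fst p * snd p)); auto.
    intros k Hk. cbn [fst snd]. apply jc_mult. apply jc_lam; auto. apply jc_x; auto.
    apply jc_lsum; auto.
  - intros lam L P. assert (Nl : lam <> nil) by (eapply nonnil; eauto).
    assert (HS : 0 < lsum lam) by (apply lsum_pos_vec; auto).
    exists (fun i _ => nth i lam 0 / lsum lam). split; [|split].
    + intros i x Hi Lx.
      apply is_derive_ext with (f := fun t => (Ta lam x - nth i lam 0 * nth i x 0) / lsum lam + nth i lam 0 / lsum lam * t).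
      { intros t. rewrite rule_b_big by lia. unfold Ta. rewrite upd_sum by lia. cbn [fst snd]. match goal with |- ?a = ?b => change (@eq R a b) end. field. lra. }
      auto_derive. auto. ring.
    + intros i x _ _ eps He. exists 1. split. lra. intros. rewrite Rminus_diag, Rabs_R0. auto.
    + intros i x Hi _. apply Rdiv_lt_0_compat; auto. apply nth_pos; auto. lia.
Qed.

Lemma rule_b_Ax4 : Ax4 rule_b.
Proof. intros x y.
  exists (nth 0 [1;1] 0 * qf (nth 0 [x;y] 0) / Qc [1;1] [x;y]).
  exists (nth 1 [1;1] 0 * qf (nth 1 [x;y] 0) / Qc [1;1] [x;y]).
  assert (P : pos_vec [1;1]) by (repeat constructor; lra).
  split; [|split; [|split]].
  - exact (rule_b_deriv_small [1;1] [x;y] 0 P eq_refl ltac:(simpl; lia) ltac:(simpl; lia)).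
  - exact (rule_b_deriv_small [1;1] [x;y] 1 P eq_refl ltac:(simpl; lia) ltac:(simpl; lia)).
  - rewrite Elo_ratio, <- qf_ratio. assert (0 < Qc [1;1] [x;y]) by (apply Qc_pos; auto; congruence).
    assert (0 < qf x) by apply qf_pos. assert (0 < qf y) by apply qf_pos.
    cbn [nth]. field. lra.
  - apply Elo_ratio.
Qed.

Theorem proposition4 :
  (Ax1 rule_a /\ Ax2 rule_a /\ Ax3 rule_a /\ ~ Ax4 rule_a) /\
  (Ax1 rule_b /\ Ax2 rule_b /\ Ax4 rule_b /\ ~ Ax3 rule_b) /\
  (forall eta : R, 0 < eta ->
     Ax2 (rule_c eta) /\ Ax3 (rule_c eta) /\ Ax4 (rule_c eta) /\ ~ Ax1 (rule_c eta)).
Proof.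
  split; [|split].
  - exact (conj rule_a_Ax1 (conj rule_a_Ax2 (conj rule_a_Ax3 rule_a_not_Ax4))).
  - exact (conj rule_b_Ax1 (conj rule_b_Ax2 (conj rule_b_Ax4 rule_b_not_Ax3))).
  - intros eta He. exact (conj (rule_c_Ax2 eta He) (conj (rule_c_Ax3 eta He) (conj (rule_c_Ax4 eta He) (rule_c_not_Ax1 eta He)))).
Qed.
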